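(* Let $G$ be a torsion-free acylindrically hyperbolic group and let $g\in G$ be a generalised loxodromic element. Then $g$ is chiral, i.e. there is no $n\geq1$ such that $g^n$ is conjugate to $g^{-n}$.
   Context: An action of $G$ on a metric space $X$ is acylindrical if for every $r\in\mathbb{N}$ there exist $R,N\in\mathbb{N}$ such that for all $x,y\in X$ with $d(x,y)\ge R$, the number of $g\in G$ with $\max\{d(x,gx),d(y,gy)\}\le r$ is at most $N$. $G$ is acylindrically hyperbolic if it admits a non-elementary acylindrical action on a Gromov-hyperbolic space; an element of $G$ that acts loxodromically for some such action is called a generalised loxodromic element. *)

(* Defs.v *)
From Stdlib Require Import Reals ZArith List.
Open Scope R_scope.

Record Group := MkGroup {
  gcar :> Type;
  gmul : gcar -> gcar -> gcar;
  gone : gcar;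
  ginv : gcar -> gcar;
  gmulA : forall a b c, gmul a (gmul b c) = gmul (gmul a b) c;
  gmul1l : forall a, gmul gone a = a;
  gmul1r : forall a, gmul a gone = a;
  gmulVl : forall a, gmul (ginv a) a = gone;
  gmulVr : forall a, gmul a (ginv a) = gone
}.

Arguments gmul {_} _ _.
Arguments gone {_}.
Arguments ginv {_} _.

Fixpoint gpow {G : Group} (g : G) (n : nat) : G :=
  match n with O => gone | S k => gmul g (gpow g k) end.

Definition gzpow {G : Group} (g : G) (z : Z) : G :=
  match z with
  | Z0 => gone
  | Zpos p => gpow g (Pos.to_nat p)
  | Zneg p => ginv (gpow g (Pos.to_nat p))
  end.

Definition torsion_free (G : Group) : Prop :=
  forall (g : G) (n : nat), (1 <= n)%nat -> gpow g n = gone -> g = gone.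

Definition chiral {G : Group} (g : G) : Prop :=
  ~ exists (n : nat) (h : G),
      (1 <= n)%nat /\ gmul h (gmul (gpow g n) (ginv h)) = ginv (gpow g n).

Record MetricSpace := MkMetric {
  mcar :> Type;
  dist : mcar -> mcar -> R;
  dist_ge0 : forall x y, 0 <= dist x y;
  dist_eq0 : forall x y, dist x y = 0 <-> x = y;
  dist_sym : forall x y, dist x y = dist y x;
  dist_tri : forall x y z, dist x z <= dist x y + dist y z
}.

Arguments dist {_} _ _.

Definition geodesic (X : MetricSpace) : Prop :=
  forall x y : X, exists gam : R -> X,
    gam 0 = x /\ gam (dist x y) = y /\
    forall s t, 0 <= s <= dist x y -> 0 <= t <= dist x y ->
      dist (gam s) (gam t) = Rabs (s - t).

Definition gromov_prod {X : MetricSpace} (x y w : X) : R :=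
  (dist x w + dist y w - dist x y) / 2.

Definition gromov_hyperbolic (X : MetricSpace) : Prop :=
  exists delta : R, 0 <= delta /\
    forall x y z w : X,
      gromov_prod x z w >= Rmin (gromov_prod x y w) (gromov_prod y z w) - delta.

Definition isometric_action (G : Group) (X : MetricSpace) (act : G -> X -> X) : Prop :=
  (forall x, act gone x = x) /\
  (forall g h x, act (gmul g h) x = act g (act h x)) /\
  (forall g x y, dist (act g x) (act g y) = dist x y).

Definition acylindrical (G : Group) (X : MetricSpace) (act : G -> X -> X) : Prop :=
  forall r : nat, exists Rr N : nat,
    forall x y : X, dist x y >= INR Rr ->
      forall l : list G, NoDup l ->
        (forall g, In g l -> Rmax (dist x (act g x)) (dist y (act g y)) <= INR r) ->
        (length l <= N)%nat.

(** sequences converging at infinity, and equivalence of such sequences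
    (points of the sequential Gromov boundary), w.r.t. a basepoint o *)
Definition conv_at_infty {X : MetricSpace} (o : X) (u : nat -> X) : Prop :=
  forall K : R, exists N : nat, forall i j, (N <= i)%nat -> (N <= j)%nat ->
    gromov_prod (u i) (u j) o >= K.

Definition equiv_at_infty {X : MetricSpace} (o : X) (u v : nat -> X) : Prop :=
  forall K : R, exists N : nat, forall i j, (N <= i)%nat -> (N <= j)%nat ->
    gromov_prod (u i) (v j) o >= K.

(** u represents a limit point of the action: a sequence in the orbit G.o
    converging at infinity *)
Definition limit_seq (G : Group) (X : MetricSpace) (act : G -> X -> X) (o : X)
  (u : nat -> X) : Prop :=
  (forall n, exists g : G, u n = act g o) /\ conv_at_infty o u.

(** non-elementary: the limit set has more than two points *)
Definition non_elementary (G : Group) (X : MetricSpace) (act : G -> X -> X) : Prop :=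
  exists (o : X) (u v w : nat -> X),
    limit_seq G X act o u /\ limit_seq G X act o v /\ limit_seq G X act o w /\
    ~ equiv_at_infty o u v /\ ~ equiv_at_infty o v w /\ ~ equiv_at_infty o u w.

Definition loxodromic (G : Group) (X : MetricSpace) (act : G -> X -> X) (g : G) : Prop :=
  exists (x : X) (lam C : R), 1 <= lam /\ 0 <= C /\
    forall m n : Z,
      IZR (Z.abs (m - n)) / lam - C <= dist (act (gzpow g m) x) (act (gzpow g n) x) /\
      dist (act (gzpow g m) x) (act (gzpow g n) x) <= lam * IZR (Z.abs (m - n)) + C.

Definition nonelem_acyl_hyp_action (G : Group) (X : MetricSpace) (act : G -> X -> X) : Prop :=
  geodesic X /\ gromov_hyperbolic X /\ isometric_action G X act /\
  acylindrical G X act /\ non_elementary G X act.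

Definition acylindrically_hyperbolic (G : Group) : Prop :=
  exists (X : MetricSpace) (act : G -> X -> X), nonelem_acyl_hyp_action G X act.

Definition generalised_loxodromic (G : Group) (g : G) : Prop :=
  exists (X : MetricSpace) (act : G -> X -> X),
    nonelem_acyl_hyp_action G X act /\ loxodromic G X act g.

(* Main.v *)
Require Import Defs.
From Stdlib Require Import Reals ZArith List.
From Stdlib Require Import Lia Lra Classical IndefiniteDescription.
Require Import Defs.
Open Scope R_scope.

Lemma nat_big (A : R) : exists n : nat, A < INR n.
Proof. destruct (INR_archimed 1 A) as [n Hn]; [lra|]. exists n; lra. Qed.

Lemma cancel_l (G : Group) (u v w : G) : gmul u v = gmul u w -> v = w.
Proof.
  intros H. rewrite <- (gmul1l G v), <- (gmul1l G w), <- (gmulVl G u), <- !gmulA, H; reflexivity.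
Qed.

Lemma cancel_r (G : Group) (u v w : G) : gmul v u = gmul w u -> v = w.
Proof.
  intros H. rewrite <- (gmul1r G v), <- (gmul1r G w), <- (gmulVr G u), !gmulA, H; reflexivity.
Qed.

Lemma inv_unique (G : Group) (u v : G) : gmul u v = gone -> v = ginv u.
Proof.
  intros H. rewrite <- (gmul1l G v), <- (gmulVl G u), <- gmulA, H, gmul1r; reflexivity.
Qed.

Lemma inv_mul (G : Group) (u v : G) : ginv (gmul u v) = gmul (ginv v) (ginv u).
Proof.
  symmetry; apply inv_unique.
  rewrite <- gmulA, (gmulA G v), gmulVr, gmul1l, gmulVr; reflexivity.
Qed.

Lemma inv_inv (G : Group) (u : G) : ginv (ginv u) = u.
Proof. symmetry; apply inv_unique, gmulVl. Qed.

Lemma inv_one (G : Group) : ginv (@gone G) = gone.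
Proof. symmetry; apply inv_unique, gmul1l. Qed.

Lemma pow_add (G : Group) (a : G) i j : gpow a (i + j) = gmul (gpow a i) (gpow a j).
Proof.
  induction i; simpl. now rewrite gmul1l. rewrite IHi, gmulA; reflexivity.
Qed.

Lemma pow_mul (G : Group) (a : G) n k : gpow (gpow a n) k = gpow a (n * k).
Proof.
  induction k; simpl. now rewrite Nat.mul_0_r.
  rewrite IHk, <- pow_add. f_equal. lia.
Qed.

Lemma pow_one (G : Group) k : gpow (@gone G) k = gone.
Proof. induction k; simpl; auto. rewrite IHk, gmul1l; auto. Qed.

Lemma pow_Sr (G : Group) (a : G) k : gpow a (S k) = gmul (gpow a k) a.
Proof.
  replace (S k) with (k + 1)%nat by lia. rewrite pow_add; simpl. now rewrite gmul1r.
Qed.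

Lemma comm_pow (G : Group) (u v : G) : gmul u v = gmul v u ->
  forall k, gmul u (gpow v k) = gmul (gpow v k) u.
Proof.
  intros H k; induction k; simpl. now rewrite gmul1l, gmul1r.
  rewrite gmulA, H, <- gmulA, IHk, gmulA; reflexivity.
Qed.

Lemma comm_pow2 (G : Group) (u v : G) : gmul u v = gmul v u ->
  forall i j, gmul (gpow u i) (gpow v j) = gmul (gpow v j) (gpow u i).
Proof.
  intros H i j. symmetry. apply comm_pow. intros. symmetry. apply comm_pow. auto.
Qed.

Lemma comm_inv (G : Group) (u v : G) : gmul u v = gmul v u ->
  gmul (ginv u) v = gmul v (ginv u).
Proof.
  intros H. apply (cancel_l G u). rewrite gmulA, gmulVr, gmul1l, gmulA, H, <- gmulA, gmulVr, gmul1r.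
  reflexivity.
Qed.

Lemma conj_pow (G : Group) (h a : G) k :
  gmul h (gmul (gpow a k) (ginv h)) = gpow (gmul h (gmul a (ginv h))) k.
Proof.
  induction k; simpl. now rewrite gmul1l, gmulVr.
  rewrite <- IHk. rewrite <- !gmulA. f_equal. f_equal.
  rewrite (gmulA G (ginv h)), gmulVl, gmul1l; reflexivity.
Qed.

Lemma inv_pow (G : Group) (a : G) k : gpow (ginv a) k = ginv (gpow a k).
Proof.
  induction k; simpl. now rewrite inv_one.
  rewrite IHk, <- inv_mul, <- pow_Sr; reflexivity.
Qed.

Lemma conj_inv (G : Group) (h u : G) :
  gmul h (gmul (ginv u) (ginv h)) = ginv (gmul h (gmul u (ginv h))).
Proof. rewrite !inv_mul, inv_inv, gmulA; reflexivity. Qed.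

Definition D {G : Group} (a : G) s t := gmul (gpow a s) (ginv (gpow a t)).

Lemma powcomm (G : Group) (a : G) i j : gmul (gpow a i) (gpow a j) = gmul (gpow a j) (gpow a i).
Proof. rewrite <- !pow_add, Nat.add_comm; reflexivity. Qed.

Lemma powinvcomm (G : Group) (a : G) i j :
  gmul (ginv (gpow a i)) (gpow a j) = gmul (gpow a j) (ginv (gpow a i)).
Proof. apply comm_inv, powcomm. Qed.

Lemma D_mul (G : Group) (a : G) s1 t1 s2 t2 :
  gmul (D a s1 t1) (D a s2 t2) = D a (s1 + s2) (t1 + t2).
Proof.
  unfold D. rewrite <- gmulA, (gmulA G (ginv _)), powinvcomm, <- gmulA, gmulA, <- pow_add.
  f_equal. rewrite <- inv_mul, <- pow_add, Nat.add_comm; reflexivity.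
Qed.

Lemma D_inv (G : Group) (a : G) s t : ginv (D a s t) = D a t s.
Proof. unfold D. rewrite inv_mul, inv_inv; reflexivity. Qed.

Lemma D_comm (G : Group) (a : G) s t k : gmul (D a s t) (gpow a k) = gmul (gpow a k) (D a s t).
Proof.
  unfold D. rewrite <- gmulA, powinvcomm, gmulA, powcomm, <- gmulA; reflexivity.
Qed.

Lemma D_aK (G : Group) (a : G) s t K : gmul (D a s t) (gpow a K) = D a (s + K) t.
Proof.
  unfold D. rewrite <- gmulA, powinvcomm, gmulA, pow_add; reflexivity.
Qed.

Lemma D_invaK (G : Group) (a : G) s t K : gmul (ginv (gpow a K)) (D a s t) = D a s (t + K).
Proof.
  unfold D. rewrite gmulA, powinvcomm, <- gmulA, pow_add, inv_mul; reflexivity.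
Qed.

Lemma D00 (G : Group) (a : G) : D a 0 0 = gone.
Proof. unfold D; simpl. rewrite inv_one, gmul1l; reflexivity. Qed.

Lemma D_conj (G : Group) (a h : G) s t :
  gmul h (gmul a (ginv h)) = ginv a ->
  gmul h (gmul (D a s t) (ginv h)) = D a t s.
Proof.
  intros H. unfold D.
  assert (E : gmul h (gmul (gmul (gpow a s) (ginv (gpow a t))) (ginv h)) =
     gmul (gmul h (gmul (gpow a s) (ginv h))) (gmul h (gmul (ginv (gpow a t)) (ginv h)))).
  { rewrite <- !gmulA. f_equal. f_equal. rewrite (gmulA G (ginv h)), gmulVl, gmul1l. reflexivity. }
  rewrite E, conj_inv, !conj_pow, H, inv_pow, inv_pow, inv_inv.
  apply powinvcomm.
Qed.

Lemma fourpt (X : MetricSpace) (dl : R)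
  (H : forall x y z w : X, gromov_prod x z w >= Rmin (gromov_prod x y w) (gromov_prod y z w) - dl)
  (P Q Z W : X) :
  dist P Z + dist Q W <= Rmax (dist P Q + dist Z W) (dist P W + dist Q Z) + 2 * dl.
Proof.
  specialize (H P Q Z W). unfold gromov_prod in H. unfold Rmin, Rmax in *.
  destruct (Rle_dec _ _); destruct (Rle_dec _ _); lra.
Qed.

Section A.
End A.

Lemma actM' (G : Group) (X : MetricSpace) act (Hiso : isometric_action G X act) u v y :
  act (gmul u v) y = act u (act v y).
Proof. destruct Hiso as [_ [H _]]; apply H. Qed.

Lemma act1' (G : Group) (X : MetricSpace) act (Hiso : isometric_action G X act) y :
  act gone y = y.
Proof. destruct Hiso as [H _]; apply H. Qed.

Lemma dact (G : Group) (X : MetricSpace) act (Hiso : isometric_action G X act) u y y' :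
  dist (act u y) (act u y') = dist y y'.
Proof. destruct Hiso as [_ [_ H]]; apply H. Qed.

Lemma move_comm (G : Group) (X : MetricSpace) act (Hiso : isometric_action G X act) (W u : G) x :
  gmul u W = gmul W u -> dist (act W x) (act u (act W x)) = dist x (act u x).
Proof.
  intros H. rewrite <- (actM' G X act Hiso u W), H, (actM' G X act Hiso W u), dact; auto.
Qed.

Lemma inv_move (G : Group) (X : MetricSpace) act (Hiso : isometric_action G X act) (u : G) y y' :
  dist (act (ginv u) y) y' = dist y (act u y').
Proof.
  rewrite <- (dact G X act Hiso u), <- actM', gmulVr, act1'; auto.
Qed.

Lemma step (G : Group) (X : MetricSpace) act (Hiso : isometric_action G X act) (dl : R)
  (H4 : forall x y z w : X, gromov_prod x z w >= Rmin (gromov_prod x y w) (gromov_prod y z w) - dl)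
  (a : G) (x z : X) K
  (HK : dist x (act (gpow a (K+K)) x) - dist x (act (gpow a K) x) >= 4*dl+1)
  (Hz : dist (act (gpow a K) z) z = dist x (act (gpow a K) x)) :
  forall s t, dist x (act (gpow a K) x) <= dist z (act (D a s t) x) ->
   exists s' t', dist z (act (D a s' t') x) <= dist z (act (D a s t) x) - 1.
Proof.
  intros s t Hge.
  set (aK := gpow a K) in *.
  set (W := D a s t) in *.
  set (p0 := act W x).
  assert (Epp : act (D a (s+K) t) x = act aK p0).
  { rewrite <- D_aK, D_comm, actM'; auto. }
  assert (Epm : act (D a s (t+K)) x = act (ginv aK) p0).
  { rewrite <- D_invaK, actM'; auto. }
  set (pp := act aK p0) in *. set (pm := act (ginv aK) p0) in *.
  set (gK := dist x (act aK x)) in *.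
  set (g2 := dist x (act (gpow a (K+K)) x)) in *.
  assert (e1 : dist pm pp = g2).
  { unfold pm, pp. rewrite inv_move, <- actM'; auto. unfold aK; rewrite <- pow_add.
    unfold p0; apply move_comm; auto. symmetry; apply D_comm. }
  assert (e2 : dist pm p0 = gK).
  { unfold pm. rewrite inv_move; auto. unfold p0; apply move_comm; auto.
    symmetry; apply D_comm. }
  assert (e3 : dist p0 pp = gK).
  { unfold pp, p0; apply move_comm; auto. symmetry; apply D_comm. }
  assert (e4 : dist p0 (act aK z) = dist pm z).
  { unfold pm. rewrite inv_move; auto. }
  assert (e5 : dist pp (act aK z) = dist p0 z).
  { unfold pp. rewrite dact; auto. }
  pose proof (fourpt X dl H4 pm p0 pp z) as A.
  pose proof (fourpt X dl H4 p0 pp (act aK z) z) as B.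
  rewrite e1, e2, e3 in A. rewrite e3, e4, e5, Hz in B.
  assert (dl0 : True) by auto.
  rewrite (dist_sym _ p0 z) in A, B.
  rewrite (dist_sym _ pp z) in A, B. rewrite (dist_sym _ pm z) in A, B.
  fold p0 in Hge.
  unfold Rmax in A, B.
  destruct (Rle_dec (gK + dist z pp) (dist z pm + gK)) as [c1|c1];
  destruct (Rle_dec (gK + gK) (dist z p0 + dist z p0)) as [c2|c2].
  - exists (s+K)%nat, t. rewrite Epp. fold pp. lra.
  - lra.
  - exists s, (t+K)%nat. rewrite Epm. fold pm. lra.
  - lra.
Qed.

Lemma descent (G : Group) (X : MetricSpace) act (Hiso : isometric_action G X act) (dl : R)
  (H4 : forall x y z w : X, gromov_prod x z w >= Rmin (gromov_prod x y w) (gromov_prod y z w) - dl)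
  (a : G) (x z : X) K
  (HK : dist x (act (gpow a (K+K)) x) - dist x (act (gpow a K) x) >= 4*dl+1)
  (Hz : dist (act (gpow a K) z) z = dist x (act (gpow a K) x)) :
  forall n s t, dist z (act (D a s t) x) <= dist x (act (gpow a K) x) + INR n ->
   exists s' t', dist z (act (D a s' t') x) < dist x (act (gpow a K) x).
Proof.
  induction n; intros s t Hd.
  - destruct (Rlt_dec (dist z (act (D a s t) x)) (dist x (act (gpow a K) x))) as [c|c].
    + eauto.
    + destruct (step G X act Hiso dl H4 a x z K HK Hz s t) as [s' [t' Hs]]; [lra|].
      exists s', t'. simpl in Hd. lra.
  - destruct (Rlt_dec (dist z (act (D a s t) x)) (dist x (act (gpow a K) x))) as [c|c].
    + eauto.
    + destruct (step G X act Hiso dl H4 a x z K HK Hz s t) as [s' [t' Hs]]; [lra|].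
      apply (IHn s' t'). rewrite S_INR in Hd. lra.
Qed.

Lemma gzpow_nat (G : Group) (g : G) m : gzpow g (Z.of_nat m) = gpow g m.
Proof. destruct m; simpl; auto. rewrite SuccNat2Pos.id_succ; auto. Qed.

Lemma pow2_ge (k : nat) : (k + 1 <= 2 ^ k)%nat.
Proof. induction k; simpl; lia. Qed.

Lemma expo (A B : R) : exists i : nat, A + INR i * B < INR (2 ^ i).
Proof.
  destruct (nat_big (Rabs A + 2 * Rabs B + 1)) as [k Hk].
  exists (k + k)%nat. rewrite Nat.pow_add_r, mult_INR, plus_INR.
  pose proof (le_INR _ _ (pow2_ge k)) as Hp. rewrite plus_INR in Hp. simpl in Hp.
  pose proof (Rle_abs A). pose proof (Rle_abs B). pose proof (Rabs_pos A). pose proof (Rabs_pos B).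
  pose proof (pos_INR k).
  set (P := INR (2 ^ k)) in *. set (kk := INR k) in *.
  assert (P * P >= (kk + 1) * (kk + 1)) by nra.
  nra.
Qed.

Lemma comm_mul (G : Group) (u v w : G) : gmul u w = gmul w u -> gmul v w = gmul w v ->
  gmul (gmul u v) w = gmul w (gmul u v).
Proof. intros H1 H2. rewrite <- gmulA, H2, gmulA, H1, gmulA; reflexivity. Qed.

Lemma nodup_map (A : Type) (e : nat -> A) : (forall i j, (i < j)%nat -> e i <> e j) ->
  forall m b, NoDup (map e (seq b m)).
Proof.
  intros H m; induction m; intros b; simpl; constructor.
  - intro Hin. apply in_map_iff in Hin as [k [Hk Hin]]. apply in_seq in Hin.
    apply (H b k); [lia | auto].
  - apply IHm.
Qed.

Theorem lemma2p8 (G : Group) (Htf : torsion_free G)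
  (Hah : acylindrically_hyperbolic G) (g : G)
  (Hg : generalised_loxodromic G g) : chiral g.
Proof.
  intros [n [h [Hn Hconj]]].
  destruct Hg as [X [act [[_ [[dl [Hdl H4]] [Hiso [Hacyl _]]]] [x [lam [C [Hlam [HC Hq]]]]]]]].
  set (a := gpow g n) in *.
  set (gf := fun k => dist x (act (gpow a k) x)).
  assert (lowb : forall k, INR k / lam - C <= gf k).
  { intro k. destruct (Hq (Z.of_nat (n * k)) 0%Z) as [Hl _].
    rewrite Z.sub_0_r, Z.abs_eq in Hl by apply Nat2Z.is_nonneg.
    rewrite <- INR_IZR_INZ, gzpow_nat in Hl. simpl gzpow in Hl.
    rewrite act1' in Hl by auto. unfold gf, a. rewrite pow_mul, dist_sym.
    assert (INR k <= INR (n * k)) by (apply le_INR; nia).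
    assert (INR k / lam <= INR (n * k) / lam).
    { unfold Rdiv; apply Rmult_le_compat_r; [left; apply Rinv_0_lt_compat; lra| auto]. }
    lra. }
  assert (mulinv : forall u, lam * (u / lam) = u) by (intros; field; lra).
  assert (Hdbl : exists K, gf (K + K)%nat - gf K >= 4 * dl + 1).
  { apply NNPP. intros Hno.
    assert (Hlt : forall K, gf (K + K)%nat - gf K < 4 * dl + 1).
    { intros K. apply Rnot_ge_lt. intro H; apply Hno; eauto. }
    assert (Hi : forall i, gf (2 ^ i)%nat <= gf 1%nat + INR i * (4 * dl + 1)).
    { induction i.
      - simpl. lra.
      - replace (2 ^ S i)%nat with (2 ^ i + 2 ^ i)%nat by (simpl; lia).
        rewrite S_INR. specialize (Hlt (2 ^ i)%nat). lra. }
    destruct (expo (lam * (gf 1%nat + C)) (lam * (4 * dl + 1))) as [i Hi2].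
    specialize (Hi i). specialize (lowb (2 ^ i)%nat). specialize (mulinv (INR (2 ^ i))).
    nra. }
  destruct Hdbl as [K HK].
  set (c := gpow h 2).
  assert (ha : gmul h a = gmul (ginv a) h).
  { rewrite <- Hconj, <- !gmulA, gmulVl, gmul1r; reflexivity. }
  assert (hia : gmul h (ginv a) = gmul a h).
  { assert (E := conj_inv G h a). rewrite Hconj, inv_inv in E.
    rewrite <- E at 2. rewrite <- !gmulA, gmulVl, gmul1r; reflexivity. }
  assert (ca : gmul c a = gmul a c).
  { unfold c; simpl. rewrite gmul1r, <- gmulA, ha, gmulA, hia, <- gmulA; reflexivity. }
  assert (Hz : forall j, dist (act (gpow a K) (act (gpow c j) x)) (act (gpow c j) x) = gf K).
  { intro j. rewrite <- actM' by auto. rewrite <- comm_pow2 by auto.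
    rewrite actM' by auto. rewrite dact by auto. apply dist_sym. }
  assert (Hch : forall j, {p : nat * nat |
     dist (act (gpow c j) x) (act (D a (fst p) (snd p)) x) < gf K}).
  { intro j. apply constructive_indefinite_description.
    destruct (nat_big (dist (act (gpow c j) x) x - gf K)) as [m Hm].
    destruct (descent G X act Hiso dl H4 a x (act (gpow c j) x) K HK (Hz j) m 0 0) as [s [t Hst]].
    { rewrite D00, act1' by auto. unfold gf in Hm. lra. }
    exists (s, t); auto. }
  set (Sf := fun j => fst (proj1_sig (Hch j))).
  set (Tf := fun j => snd (proj1_sig (Hch j))).
  assert (HST : forall j, dist (act (gpow c j) x) (act (D a (Sf j) (Tf j)) x) < gf K).
  { intro j. unfold Sf, Tf. destruct (Hch j) as [p Hp]; simpl; auto. }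
  set (e := fun j => gmul (ginv (D a (Sf j) (Tf j))) (gpow c j)).
  assert (ecomm : forall j L, gmul (e j) (gpow a L) = gmul (gpow a L) (e j)).
  { intros j L. unfold e. apply comm_mul.
    - apply comm_inv. apply D_comm.
    - apply comm_pow2; auto. }
  assert (emove : forall j, dist x (act (e j) x) < gf K).
  { intro j. unfold e. rewrite actM' by auto. rewrite dist_sym, inv_move by auto. apply HST. }
  destruct (nat_big (gf K)) as [r Hr].
  destruct (Hacyl r) as [Rr [N HN]].
  destruct (nat_big (lam * (INR Rr + C))) as [L HL].
  set (y := act (gpow a L) x).
  assert (Hxy : dist x y >= INR Rr).
  { specialize (lowb L). specialize (mulinv (INR L)). unfold y. fold (gf L). nra. }
  destruct (classic (exists i j, (i < j)%nat /\ e i = e j)) as [[i [j [Hij Heq]]] | Hno].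
  2:{ assert (ND : NoDup (map e (seq 0 (S N)))).
      { apply nodup_map. intros i j Hij Heq. apply Hno; eauto. }
      specialize (HN x y Hxy _ ND).
      rewrite length_map, length_seq in HN. apply (Nat.nle_succ_diag_l N). apply HN.
      intros u Hu. apply in_map_iff in Hu as [j [Hj _]]. subst u.
      apply Rmax_lub.
      - specialize (emove j). lra.
      - unfold y. rewrite move_comm by auto. specialize (emove j). lra. }
  set (p := (j - i)%nat).
  assert (Ej : gpow c j = gmul (gpow c p) (gpow c i)).
  { rewrite <- pow_add. f_equal. unfold p; lia. }
  unfold e in Heq. rewrite Ej, gmulA in Heq. apply cancel_r in Heq.
  assert (Ev : gmul (D a (Sf j) (Tf j)) (ginv (D a (Sf i) (Tf i))) = gpow c p).
  { rewrite Heq, gmulA, gmulVr, gmul1l; reflexivity. }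
  rewrite D_inv, D_mul in Ev.
  set (v := D a (Sf j + Tf i) (Tf j + Sf i)) in *.
  assert (Ec : gmul h (gmul v (ginv h)) = v).
  { rewrite Ev. unfold c. rewrite pow_mul.
    rewrite gmulA, (comm_pow G h h eq_refl), <- gmulA, gmulVr, gmul1r; reflexivity. }
  assert (Einv : ginv v = v).
  { unfold v at 1. rewrite D_inv. rewrite <- D_conj with (h := h) by auto. exact Ec. }
  assert (v1 : v = gone).
  { apply (Htf v 2%nat); [lia|]. simpl. rewrite gmul1r. rewrite <- Einv at 2. apply gmulVr. }
  assert (h1 : h = gone).
  { apply (Htf h (2 * p)%nat); [unfold p; lia|]. rewrite <- pow_mul. fold c. rewrite <- Ev. exact v1. }
  rewrite h1, inv_one, gmul1l, gmul1r in Hconj.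
  assert (a1 : a = gone).
  { apply (Htf a 2%nat); [lia|]. simpl. rewrite gmul1r. rewrite Hconj at 2. apply gmulVr. }
  destruct (nat_big (lam * (C + 1))) as [k Hk].
  specialize (lowb k). specialize (mulinv (INR k)). unfold gf in lowb.
  rewrite a1, pow_one, act1' in lowb by auto.
  assert (dist x x = 0) by (apply dist_eq0; auto).
  nra.
Qed.
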